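(* Under the curve flow $\gamma_t=k_1\gamma''+k_2\gamma'+r_0\gamma$ with $r_0=-\big(k_2'+\tfrac13(k_1''+2k_1^2)\big)$, the curvature evolution is bi-Hamiltonian: \[ \begin{pmatrix}k_1\\ k_2\end{pmatrix}_t=\mathcal{P}\,\mathsf E\rho_2=\mathcal{Q}\,\mathsf E\rho_4, \] with $\rho_2=k_1k_2$ and $\rho_4=\tfrac13(k_1'')^2+k_1''(k_2'-k_1^2)-k_1(k_1')^2+(k_2')^2-k_1^2k_2'+\tfrac19k_1^4+2k_1k_2^2$. Hence $\int\rho_2\,\mathrm{d}x$ and $\int\rho_4\,\mathrm{d}x$ are conserved integrals (and so is $\int k_1\,\mathrm{d}x$).
   Context: $\gamma(x,t)$ is a family of nondegenerate curves in centroaffine $\mathbb R^3$ parametrized by centroaffine arclength $x$ ($\det(\gamma,\gamma',\gamma'')=1$), with $\gamma'''=(k_1\gamma)'+k_2\gamma$. $D=\partial/\partial x$; $\mathcal{P}=\begin{pmatrix}-2D^3+Dk_1+k_1D & -D^4+D^2k_1+2Dk_2+k_2D\\ D^4-k_1D^2+2k_2D+Dk_2 & \tfrac23(D^5+k_1Dk_1-k_1D^3-D^3k_1)+[k_2,D^2]\end{pmatrix}$, $\mathcal{Q}=\begin{pmatrix}0&D\\ D&0\end{pmatrix}$, and $\mathsf E f=\big(\sum_{j\ge0}(-D)^j\partial f/\partial k_1^{(j)},\ \sum_{j\ge0}(-D)^j\partial f/\partial k_2^{(j)}\big)^{\mathrm T}$ is the vector Euler operator. *)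

(* Defs.v *)
From Stdlib Require Import Reals.
From Coquelicot Require Import Coquelicot.
Open Scope R_scope.

(* Functions of (x, t); x = centroaffine arclength, t = time. *)

Definition dx (f : R -> R -> R) : R -> R -> R :=
  fun x t => Derive (fun y => f y t) x.
Definition dt (f : R -> R -> R) : R -> R -> R :=
  fun x t => Derive (fun s => f x s) t.

Fixpoint dpart (l : list bool) (f : R -> R -> R) : R -> R -> R :=
  match l with
  | nil => f
  | cons b l' => (if b then dx else dt) (dpart l' f)
  end.

Definition smooth2 (f : R -> R -> R) : Prop :=
  forall (l : list bool) (x t : R),
    ex_derive (fun y => dpart l f y t) x /\
    ex_derive (fun s => dpart l f x s) t /\
    continuous (fun p : R * R => dpart l f (fst p) (snd p)) (x, t).

Definition dxn (n : nat) (f : R -> R -> R) : R -> R -> R :=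
  fun x t => Derive_n (fun y => f y t) n x.

Definition det3 (u v w : nat -> R) : R :=
  u 0%nat * (v 1%nat * w 2%nat - v 2%nat * w 1%nat)
  - u 1%nat * (v 0%nat * w 2%nat - v 2%nat * w 0%nat)
  + u 2%nat * (v 0%nat * w 1%nat - v 1%nat * w 0%nat).

(* A differential function of (k1, k2) is a function rho a b of the jets
   a j = k1^(j), b j = k2^(j). *)
Definition jet (f : R -> R -> R) (t x : R) : nat -> R :=
  fun j => Derive_n (fun y => f y t) j x.

Definition upd (a : nat -> R) (j : nat) (s : R) : nat -> R :=
  fun i => if Nat.eqb i j then s else a i.

Definition pd1 (rho : (nat -> R) -> (nat -> R) -> R) (j : nat) (a b : nat -> R) : R :=
  Derive (fun s => rho (upd a j s) b) (a j).
Definition pd2 (rho : (nat -> R) -> (nat -> R) -> R) (j : nat) (a b : nat -> R) : R :=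
  Derive (fun s => rho a (upd b j s)) (b j).

(* Components of E rho = (sum_j (-D)^j d rho/d k1^(j), sum_j (-D)^j d rho/d k2^(j)),
   evaluated along (k1,k2)(., t); the sum is taken over j = 0..N, where N is
   (at least) the differential order of rho (higher terms vanish). *)
Definition Euler1 (N : nat) (rho : (nat -> R) -> (nat -> R) -> R)
  (k1 k2 : R -> R -> R) (t x : R) : R :=
  sum_f_R0 (fun j => (-1) ^ j *
     Derive_n (fun y => pd1 rho j (jet k1 t y) (jet k2 t y)) j x) N.
Definition Euler2 (N : nat) (rho : (nat -> R) -> (nat -> R) -> R)
  (k1 k2 : R -> R -> R) (t x : R) : R :=
  sum_f_R0 (fun j => (-1) ^ j *
     Derive_n (fun y => pd2 rho j (jet k1 t y) (jet k2 t y)) j x) N.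

Definition rho2 (a b : nat -> R) : R := a 0%nat * b 0%nat.
Definition rho4 (a b : nat -> R) : R :=
  1/3 * (a 2%nat)^2 + a 2%nat * (b 1%nat - (a 0%nat)^2)
  - a 0%nat * (a 1%nat)^2 + (b 1%nat)^2 - (a 0%nat)^2 * b 1%nat
  + 1/9 * (a 0%nat)^4 + 2 * a 0%nat * (b 0%nat)^2.
Definition rho_k1 (a b : nat -> R) : R := a 0%nat.

(* ---------- the Hamiltonian operators P and Q ----------
   K1, K2 : curvatures at a fixed time; (u, v) : the pair acted upon.
   Operator products are compositions, e.g. (k1 D k1) v = k1 * (k1 v)'. *)
Definition D (n : nat) (f : R -> R) : R -> R := Derive_n f n.
Definition mulf (f g : R -> R) : R -> R := fun y => f y * g y.

Definition Pop1 (K1 K2 u v : R -> R) (x : R) : R :=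
  (-2 * D 3 u x + D 1 (mulf K1 u) x + K1 x * D 1 u x)
  + (- D 4 v x + D 2 (mulf K1 v) x + 2 * D 1 (mulf K2 v) x + K2 x * D 1 v x).
Definition Pop2 (K1 K2 u v : R -> R) (x : R) : R :=
  (D 4 u x - K1 x * D 2 u x + 2 * K2 x * D 1 u x + D 1 (mulf K2 u) x)
  + (2/3 * (D 5 v x + K1 x * D 1 (mulf K1 v) x - K1 x * D 3 v x
            - D 3 (mulf K1 v) x)
     + (K2 x * D 2 v x - D 2 (mulf K2 v) x)).

Definition Qop1 (u v : R -> R) (x : R) : R := D 1 v x.
Definition Qop2 (u v : R -> R) (x : R) : R := D 1 u x.

Definition intdens (rho : (nat -> R) -> (nat -> R) -> R) (k1 k2 : R -> R -> R)
  (L t : R) : R :=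
  RInt (fun x => rho (jet k1 t x) (jet k2 t x)) 0 L.

(* Main.v *)
Require Import Defs.
From Stdlib Require Import Reals Lra FunctionalExtensionality List.
From Coquelicot Require Import Coquelicot.
Open Scope R_scope.

Inductive ex : Type := Cst (r : R) | At (v : nat) (w : list bool) | Add (a b : ex) | Mul (a b : ex).

Fixpoint ev (F : nat -> R -> R -> R) (e : ex) (x t : R) : R :=
  match e with
  | Cst r => r
  | At v w => dpart w (F v) x t
  | Add a b => ev F a x t + ev F b x t
  | Mul a b => ev F a x t * ev F b x t
  end.

Fixpoint dX (e : ex) : ex := match e with
  | Cst _ => Cst 0 | At v w => At v (true :: w)
  | Add a b => Add (dX a) (dX b) | Mul a b => Add (Mul (dX a) b) (Mul a (dX b)) end.
Fixpoint dT (e : ex) : ex := match e with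
  | Cst _ => Cst 0 | At v w => At v (false :: w)
  | Add a b => Add (dT a) (dT b) | Mul a b => Add (Mul (dT a) b) (Mul a (dT b)) end.

Lemma dpart_app l1 l2 f : dpart (l1 ++ l2) f = dpart l1 (dpart l2 f).
Proof. induction l1 as [|b l1 IH]; simpl; [reflexivity| rewrite IH; reflexivity]. Qed.

Lemma smooth2_dpart l f : smooth2 f -> smooth2 (dpart l f).
Proof. unfold smooth2; intros H l' x t. rewrite <- dpart_app. apply H. Qed.

Section Ev.
Variable F : nat -> R -> R -> R.
Hypothesis HF : forall v, smooth2 (F v).

Lemma ev_dX e x t : is_derive (fun y => ev F e y t) x (ev F (dX e) x t).
Proof.
  revert x; induction e as [r|v w|a IHa b IHb|a IHa b IHb]; intro x; simpl.
  - exact (is_derive_const r x).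
  - destruct (HF v w x t) as [Hd _]. apply Derive_correct in Hd. exact Hd.
  - apply (is_derive_plus (fun y => ev F a y t) (fun y => ev F b y t)); auto.
  - eapply is_derive_ext; [intro; reflexivity|].
    assert (H := is_derive_mult (fun y => ev F a y t) (fun y => ev F b y t) x _ _ (IHa x) (IHb x) Rmult_comm).
    simpl in H. unfold plus, mult in H; simpl in H.
    eapply is_derive_ext; [|exact H]. intros; reflexivity.
Qed.
End Ev.

Fixpoint itX (n : nat) (e : ex) : ex := match n with 0%nat => e | S n => dX (itX n e) end.

Section Ev2.
Variable F : nat -> R -> R -> R.
Hypothesis HF : forall v, smooth2 (F v).

Lemma ev_dT e x t : is_derive (fun s => ev F e x s) t (ev F (dT e) x t).
Proof.
  revert t; induction e as [r|v w|a IHa b IHb|a IHa b IHb]; intro t; simpl.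
  - exact (is_derive_const r t).
  - destruct (HF v w x t) as [_ [Hd _]]. apply Derive_correct in Hd. exact Hd.
  - apply (is_derive_plus (fun y => ev F a x y) (fun y => ev F b x y)); auto.
  - assert (H := is_derive_mult (fun y => ev F a x y) (fun y => ev F b x y) t _ _ (IHa t) (IHb t) Rmult_comm).
    simpl in H. unfold plus, mult in H; simpl in H.
    eapply is_derive_ext; [|exact H]. intros; reflexivity.
Qed.

Lemma Derive_ev e x t : Derive (fun y => ev F e y t) x = ev F (dX e) x t.
Proof. apply is_derive_unique, ev_dX; auto. Qed.
Lemma DeriveT_ev e x t : Derive (fun s => ev F e x s) t = ev F (dT e) x t.
Proof. apply is_derive_unique, ev_dT; auto. Qed.

Lemma ev_Dn n e x t : Derive_n (fun y => ev F e y t) n x = ev F (itX n e) x t.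
Proof.
  revert x; induction n as [|n IH]; intro x; simpl; [reflexivity|].
  rewrite (Derive_ext _ (fun y => ev F (itX n e) y t)) by (intro; apply IH).
  apply Derive_ev.
Qed.

Lemma ev_cont e x t : continuous (fun p : R * R => ev F e (fst p) (snd p)) (x, t).
Proof.
  induction e as [r|v w|a IHa b IHb|a IHa b IHb]; simpl.
  - apply continuous_const.
  - apply (HF v w x t).
  - apply (continuous_plus (fun p : R*R => ev F a (fst p) (snd p)) (fun p : R*R => ev F b (fst p) (snd p))); auto.
  - apply (continuous_mult (fun p : R*R => ev F a (fst p) (snd p)) (fun p : R*R => ev F b (fst p) (snd p))); auto.
Qed.

Lemma ev_contx e x t : continuous (fun y => ev F e y t) x.
Proof. apply (ex_derive_continuous (K:=R_AbsRing) (V:=R_NormedModule)). eexists. apply ev_dX; auto. Qed.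
End Ev2.

Lemma Dn_dpart f w n x t : Derive_n (fun y => dpart w f y t) n x = dpart (repeat true n ++ w) f x t.
Proof.
  revert x; induction n as [|n IH]; intro x; simpl; [reflexivity|].
  rewrite (Derive_ext _ (fun y => dpart (repeat true n ++ w) f y t)) by (intro; apply IH).
  reflexivity.
Qed.

Lemma schwarz2 g x t : smooth2 g -> dt (dx g) x t = dx (dt g) x t.
Proof.
  intro H. unfold dt, dx. symmetry.
  apply (Schwarz g x t).
  - exists (mkposreal 1 Rlt_0_1). intros u v _ _.
    destruct (H nil u v) as [H1 [H2 _]].
    destruct (H (false :: nil) u v) as [H3 _].
    destruct (H (true :: nil) u v) as [_ [H4 _]].
    repeat split; assumption.
  - apply continuity_2d_pt_filterlim. apply (H (true :: false :: nil) x t).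
  - apply continuity_2d_pt_filterlim. apply (H (false :: true :: nil) x t).
Qed.

Lemma perm1 f n x t : smooth2 f ->
  dpart (false :: repeat true n) f x t = dpart (repeat true n ++ false :: nil) f x t.
Proof.
  intro Hf. revert x t; induction n as [|n IH]; intros x t; [reflexivity|].
  change (dt (dx (dpart (repeat true n) f)) x t = dx (dpart (repeat true n ++ false :: nil) f) x t).
  rewrite schwarz2 by (apply smooth2_dpart; auto).
  assert (E : dt (dpart (repeat true n) f) = dpart (repeat true n ++ false :: nil) f).
  { apply functional_extensionality; intro y; apply functional_extensionality; intro s. apply IH. }
  rewrite E. reflexivity.
Qed.

Definition Fi (k1 k2 g : R -> R -> R) (v : nat) : R -> R -> R :=
  match v with 0%nat => k1 | 1%nat => k2 | _ => g end.
Lemma Fi_smooth k1 k2 g : smooth2 k1 -> smooth2 k2 -> smooth2 g -> forall v, smooth2 (Fi k1 k2 g v).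
Proof. intros; destruct v as [|[|]]; simpl; auto. Qed.

Definition ka n := At 0 (repeat true n).
Definition kb n := At 1 (repeat true n).
Definition gg n := At 2 (repeat true n).

Lemma jet_dpart f t x n : jet f t x n = dpart (repeat true n) f x t.
Proof. unfold jet. pose proof (Dn_dpart f nil n x t) as e. rewrite app_nil_r in e. exact e. Qed.
Lemma dxn_dpart f t x n : dxn n f x t = dpart (repeat true n) f x t.
Proof. apply jet_dpart. Qed.

Ltac norm := cbn [ev ka kb gg repeat dX dT itX Fi app dpart].
Ltac normin H := cbn [ev ka kb gg repeat dX dT itX Fi app dpart] in H.
Definition K1T : ex :=
  (Add (Mul (Mul (Cst (2)) (ka 0)) (ka 2)) (Add (Mul (Mul (Cst (4)) (ka 0)) (kb 1)) (Add (Mul (Mul (Cst (2)) (ka 1)) (ka 1)) (Add (Mul (Mul (Cst (4)) (ka 1)) (kb 0)) (Add (Mul (Cst (-1)) (ka 4)) (Mul (Cst (-2)) (kb 3))))))).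
Definition K2T : ex :=
  (Add (Mul (Mul (Mul (Cst (4/3)) (ka 0)) (ka 0)) (ka 1)) (Add (Mul (Mul (Cst (-2)) (ka 0)) (ka 3)) (Add (Mul (Mul (Cst (-2)) (ka 0)) (kb 2)) (Add (Mul (Mul (Cst (-4)) (ka 1)) (ka 2)) (Add (Mul (Mul (Cst (-2)) (ka 1)) (kb 1)) (Add (Mul (Cst (2/3)) (ka 5)) (Add (Mul (Mul (Cst (4)) (kb 0)) (kb 1)) (Mul (Cst (1)) (kb 4))))))))).
Definition eA : ex :=
  (Add (Mul (Mul (Mul (Cst (4/3)) (ka 0)) (ka 0)) (ka 1)) (Add (Mul (Mul (Cst (2)) (ka 0)) (kb 2)) (Add (Mul (Mul (Cst (2)) (ka 1)) (ka 2)) (Add (Mul (Mul (Cst (6)) (ka 1)) (kb 1)) (Add (Mul (Mul (Cst (4)) (ka 2)) (kb 0)) (Add (Mul (Cst (-1/3)) (ka 5)) (Add (Mul (Mul (Cst (4)) (kb 0)) (kb 1)) (Add (Mul (Cst (-1)) (kb 4)) (Add (Mul (Cst (-1)) (At 0 (false::true::nil))) (Mul (Cst (-1)) (At 1 (false::nil)))))))))))).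
Definition eB : ex :=
  (Add (Mul (Mul (Cst (2)) (ka 0)) (ka 2)) (Add (Mul (Mul (Cst (4)) (ka 0)) (kb 1)) (Add (Mul (Mul (Cst (2)) (ka 1)) (ka 1)) (Add (Mul (Mul (Cst (4)) (ka 1)) (kb 0)) (Add (Mul (Cst (-1)) (ka 4)) (Add (Mul (Cst (-2)) (kb 3)) (Mul (Cst (-1)) (At 0 (false::nil))))))))).
Definition eR0 : ex :=
  (Add (Mul (Mul (Mul (Cst (4/3)) (ka 0)) (ka 0)) (ka 1)) (Add (Mul (Mul (Cst (2)) (ka 0)) (kb 2)) (Add (Mul (Mul (Cst (2)) (ka 1)) (ka 2)) (Add (Mul (Mul (Cst (6)) (ka 1)) (kb 1)) (Add (Mul (Mul (Cst (4)) (ka 2)) (kb 0)) (Add (Mul (Cst (-1/3)) (ka 5)) (Add (Mul (Mul (Cst (4)) (kb 0)) (kb 1)) (Mul (Cst (-1)) (kb 4))))))))).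
Definition Phi_k1 : ex :=
  (Add (Mul (Mul (Cst (2)) (ka 0)) (ka 1)) (Add (Mul (Mul (Cst (4)) (ka 0)) (kb 0)) (Add (Mul (Cst (-1)) (ka 3)) (Mul (Cst (-2)) (kb 2))))).
Definition e_k1 : ex :=
  (Mul (Cst (1)) (ka 0)).
Definition Phi_r2 : ex :=
  (Add (Mul (Mul (Mul (Mul (Cst (1/3)) (ka 0)) (ka 0)) (ka 0)) (ka 0)) (Add (Mul (Mul (Mul (Cst (-2)) (ka 0)) (ka 0)) (ka 2)) (Add (Mul (Mul (Mul (Cst (-2)) (ka 0)) (ka 0)) (kb 1)) (Add (Mul (Mul (Mul (Cst (2)) (ka 0)) (ka 1)) (kb 0)) (Add (Mul (Mul (Cst (2/3)) (ka 0)) (ka 4)) (Add (Mul (Mul (Mul (Cst (4)) (ka 0)) (kb 0)) (kb 0)) (Add (Mul (Mul (Cst (1)) (ka 0)) (kb 3)) (Add (Mul (Mul (Cst (-2/3)) (ka 1)) (ka 3)) (Add (Mul (Mul (Cst (-1)) (ka 1)) (kb 2)) (Add (Mul (Mul (Cst (1/3)) (ka 2)) (ka 2)) (Add (Mul (Mul (Cst (1)) (ka 2)) (kb 1)) (Add (Mul (Mul (Cst (-1)) (ka 3)) (kb 0)) (Add (Mul (Mul (Cst (-2)) (kb 0)) (kb 2)) (Mul (Mul (Cst (1)) (kb 1)) (kb 1))))))))))))))).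
Definition e_r2 : ex :=
  (Mul (Mul (Cst (1)) (ka 0)) (kb 0)).
Definition Phi_r4 : ex :=
  (Add (Mul (Mul (Mul (Mul (Mul (Cst (-4/9)) (ka 0)) (ka 0)) (ka 0)) (ka 0)) (ka 1)) (Add (Mul (Mul (Mul (Mul (Mul (Cst (16/9)) (ka 0)) (ka 0)) (ka 0)) (ka 0)) (kb 0)) (Add (Mul (Mul (Mul (Mul (Cst (-4/9)) (ka 0)) (ka 0)) (ka 0)) (ka 3)) (Add (Mul (Mul (Mul (Mul (Cst (-26/9)) (ka 0)) (ka 0)) (ka 0)) (kb 2)) (Add (Mul (Mul (Mul (Mul (Cst (-14/3)) (ka 0)) (ka 0)) (ka 1)) (ka 2)) (Add (Mul (Mul (Mul (Mul (Cst (-22/3)) (ka 0)) (ka 0)) (ka 1)) (kb 1)) (Add (Mul (Mul (Mul (Mul (Cst (-12)) (ka 0)) (ka 0)) (ka 2)) (kb 0)) (Add (Mul (Mul (Mul (Cst (1/3)) (ka 0)) (ka 0)) (ka 5)) (Add (Mul (Mul (Mul (Mul (Cst (-12)) (ka 0)) (ka 0)) (kb 0)) (kb 1)) (Add (Mul (Mul (Mul (Cst (1)) (ka 0)) (ka 0)) (kb 4)) (Add (Mul (Mul (Mul (Mul (Cst (-2)) (ka 0)) (ka 1)) (ka 1)) (ka 1)) (Add (Mul (Mul (Mul (Mul (Cst (-4)) (ka 0)) (ka 1)) (ka 1)) (kb 0)) (Add (Mul (Mul (Mul (Cst (4/3)) (ka 0)) (ka 1)) (ka 4)) (Add (Mul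 (Mul (Mul (Mul (Cst (4)) (ka 0)) (ka 1)) (kb 0)) (kb 0)) (Add (Mul (Mul (Mul (Cst (2)) (ka 0)) (ka 1)) (kb 3)) (Add (Mul (Mul (Mul (Cst (8/3)) (ka 0)) (ka 2)) (kb 2)) (Add (Mul (Mul (Mul (Cst (-8/3)) (ka 0)) (ka 3)) (kb 1)) (Add (Mul (Mul (Mul (Cst (8/3)) (ka 0)) (ka 4)) (kb 0)) (Add (Mul (Mul (Mul (Mul (Cst (8)) (ka 0)) (kb 0)) (kb 0)) (kb 0)) (Add (Mul (Mul (Mul (Cst (4)) (ka 0)) (kb 0)) (kb 3)) (Add (Mul (Mul (Mul (Cst (-1/3)) (ka 1)) (ka 1)) (ka 3)) (Add (Mul (Mul (Mul (Cst (4/3)) (ka 1)) (ka 2)) (kb 1)) (Add (Mul (Mul (Mul (Cst (-8/3)) (ka 1)) (ka 3)) (kb 0)) (Add (Mul (Mul (Mul (Cst (-4)) (ka 1)) (kb 0)) (kb 2)) (Add (Mul (Mul (Mul (Cst (4)) (ka 1)) (kb 1)) (kb 1)) (Add (Mul (Mul (Mul (Cst (8/3)) (ka 2)) (ka 2)) (kb 0)) (Add (Mul (Mul (Mul (Cst (8)) (ka 2)) (kb 0)) (kb 1)) (Add (Mul (Mul (Cst (-1/3)) (ka 2)) (kb 4)) (Add (Mul (Mul (Mul (Cst (-2)) (ka 3)) (kb 0)) (kb 0)) (Add (Mul (Mul (Cst (1/3)) (ka 3)) (kb 3)) (Add (Mul (Mul (Cst (-1/3)) (ka 4)) (kb 2))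 (Add (Mul (Mul (Cst (1/3)) (ka 5)) (kb 1)) (Add (Mul (Mul (Mul (Cst (-4)) (kb 0)) (kb 0)) (kb 2)) (Mul (Mul (Mul (Cst (8)) (kb 0)) (kb 1)) (kb 1))))))))))))))))))))))))))))))))))).
Definition e_r4 : ex :=
  (Add (Mul (Mul (Mul (Mul (Cst (1/9)) (ka 0)) (ka 0)) (ka 0)) (ka 0)) (Add (Mul (Mul (Mul (Cst (-1)) (ka 0)) (ka 0)) (ka 2)) (Add (Mul (Mul (Mul (Cst (-1)) (ka 0)) (ka 0)) (kb 1)) (Add (Mul (Mul (Mul (Cst (-1)) (ka 0)) (ka 1)) (ka 1)) (Add (Mul (Mul (Mul (Cst (2)) (ka 0)) (kb 0)) (kb 0)) (Add (Mul (Mul (Cst (1/3)) (ka 2)) (ka 2)) (Add (Mul (Mul (Cst (1)) (ka 2)) (kb 1)) (Mul (Mul (Cst (1)) (kb 1)) (kb 1))))))))).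

Definition Sx : ex := Add (dX (Mul (ka 0) (gg 0))) (Mul (kb 0) (gg 0)).
Definition Fle : ex := Add (Mul (ka 0) (gg 2)) (Add (Mul (kb 0) (gg 1))
   (Mul (Mul (Cst (-1)) (Add (kb 1) (Mul (Cst (1/3)) (Add (ka 2) (Mul (Cst 2) (Mul (ka 0) (ka 0))))))) (gg 0))).

Lemma frame (k1 k2 g : R -> R -> R) (H1 : smooth2 k1) (H2 : smooth2 k2) (Hg : smooth2 g)
  (Hst : forall x t, dxn 3 g x t = dx (fun y s => k1 y s * g y s) x t + k2 x t * g x t)
  (Hfl : forall x t, dt g x t = k1 x t * dxn 2 g x t + k2 x t * dxn 1 g x t
       + (- (dx k2 x t + 1/3 * (dxn 2 k1 x t + 2 * (k1 x t)^2))) * g x t) x t :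
  ev (Fi k1 k2 k1) eA x t * g x t + ev (Fi k1 k2 k1) eB x t * dxn 1 g x t = 0.
Proof.
  pose proof (Fi_smooth k1 k2 g H1 H2 Hg) as HF.
  assert (S3 : forall x t, dpart (true::true::true::nil) g x t = ev (Fi k1 k2 g) Sx x t).
  { intros y s. pose proof (Hst y s) as H. rewrite dxn_dpart in H.
    unfold Sx. cbn [ev]. rewrite <- (Derive_ev _ HF). exact H. }
  assert (G4 : forall x t, dpart (true::true::true::true::nil) g x t = ev (Fi k1 k2 g) (dX Sx) x t).
  { intros y s. change (Derive (fun z => dpart (true::true::true::nil) g z s) y = ev (Fi k1 k2 g) (dX Sx) y s).
    rewrite (Derive_ext _ (fun z => ev (Fi k1 k2 g) Sx z s)) by (intro; apply S3).
    apply Derive_ev; auto. }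
  assert (G5 : forall x t, dpart (true::true::true::true::true::nil) g x t = ev (Fi k1 k2 g) (dX (dX Sx)) x t).
  { intros y s. change (Derive (fun z => dpart (true::true::true::true::nil) g z s) y = ev (Fi k1 k2 g) (dX (dX Sx)) y s).
    rewrite (Derive_ext _ (fun z => ev (Fi k1 k2 g) (dX Sx) z s)) by (intro; apply G4).
    apply Derive_ev; auto. }
  assert (Fl : forall x t, dpart (false::nil) g x t = ev (Fi k1 k2 g) Fle x t).
  { intros y s. change (dt g y s = ev (Fi k1 k2 g) Fle y s). rewrite Hfl.
    rewrite !dxn_dpart. unfold Fle. norm. change (dx k2 y s) with (dpart (true::nil) k2 y s). norm. field. }
  assert (G1t : forall x t, dpart (false::true::nil) g x t = ev (Fi k1 k2 g) (dX Fle) x t).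
  { intros y s. rewrite (perm1 g 1) by auto.
    change (Derive (fun z => dpart (false::nil) g z s) y = ev (Fi k1 k2 g) (dX Fle) y s).
    rewrite (Derive_ext _ (fun z => ev (Fi k1 k2 g) Fle z s)) by (intro; apply Fl).
    apply Derive_ev; auto. }
  assert (K : ev (Fi k1 k2 g) (itX 3 Fle) x t = ev (Fi k1 k2 g) (dT Sx) x t).
  { transitivity (dpart (true::true::true::false::nil) g x t).
    - rewrite <- (ev_Dn _ HF).
      rewrite (Derive_n_ext _ (fun y => dpart (false::nil) g y t)) by (intro; symmetry; apply Fl).
      apply Dn_dpart.
    - rewrite <- (perm1 g 3) by auto.
      change (Derive (fun s => dpart (true::true::true::nil) g x s) t = ev (Fi k1 k2 g) (dT Sx) x t).
      rewrite (Derive_ext _ (fun s => ev (Fi k1 k2 g) Sx x s)) by (intro; apply S3).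
      apply DeriveT_ev; auto. }
  unfold Sx, Fle in *.
  normin K. normin G5. normin G4. normin S3. normin Fl. normin G1t.
 rewrite G1t, Fl in K. rewrite G5 in K. rewrite G4 in K. rewrite S3 in K.
  apply Rminus_diag_eq in K. rewrite <- K.
  rewrite dxn_dpart. unfold eA, eB. norm. field.
Qed.

Lemma cramer (A B : R) (u v w : nat -> R) : det3 u v w = 1 ->
  (forall i, (i < 3)%nat -> A * u i + B * v i = 0) -> A = 0 /\ B = 0.
Proof.
  intros Hd He.
  pose proof (He 0%nat ltac:(auto)) as e0. pose proof (He 1%nat ltac:(auto)) as e1.
  pose proof (He 2%nat ltac:(auto)) as e2.
  unfold det3 in Hd. split.
  - assert (A = det3 (fun i => A * u i + B * v i) v w) as ->.
    { unfold det3. transitivity (A * 1); [ring|]. rewrite <- Hd. ring. }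
    unfold det3. rewrite e0, e1, e2. ring.
  - assert (B = det3 u (fun i => A * u i + B * v i) w) as ->.
    { unfold det3. transitivity (B * 1); [ring|]. rewrite <- Hd. ring. }
    unfold det3. rewrite e0, e1, e2. ring.
Qed.

Lemma timeform (gamma : nat -> R -> R -> R) (k1 k2 : R -> R -> R)
  (Hsg : forall i, (i < 3)%nat -> smooth2 (gamma i))
  (Hsk1 : smooth2 k1) (Hsk2 : smooth2 k2)
  (Harc : forall x t,
     det3 (fun i => gamma i x t) (fun i => dxn 1 (gamma i) x t)
          (fun i => dxn 2 (gamma i) x t) = 1)
  (Hstruct : forall i x t, (i < 3)%nat ->
     dxn 3 (gamma i) x t
     = dx (fun y s => k1 y s * gamma i y s) x t + k2 x t * gamma i x t)
  (Hflow : forall i x t, (i < 3)%nat ->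
     dt (gamma i) x t
     = k1 x t * dxn 2 (gamma i) x t + k2 x t * dxn 1 (gamma i) x t
       + (- (dx k2 x t + 1/3 * (dxn 2 k1 x t + 2 * (k1 x t)^2)))
         * gamma i x t) :
  forall x t, dt k1 x t = ev (Fi k1 k2 k1) K1T x t /\ dt k2 x t = ev (Fi k1 k2 k1) K2T x t.
Proof.
  assert (HAB : forall x t, ev (Fi k1 k2 k1) eA x t = 0 /\ ev (Fi k1 k2 k1) eB x t = 0).
  { intros x t. apply (cramer _ _ (fun i => gamma i x t) (fun i => dxn 1 (gamma i) x t) (fun i => dxn 2 (gamma i) x t)).
    - apply Harc.
    - intros i Hi. apply frame; auto. }
  pose proof (Fi_smooth k1 k2 k1 Hsk1 Hsk2 Hsk1) as HF.
  assert (T1 : forall x t, dt k1 x t = ev (Fi k1 k2 k1) K1T x t).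
  { intros x t. destruct (HAB x t) as [_ HB].
    transitivity (ev (Fi k1 k2 k1) K1T x t - ev (Fi k1 k2 k1) eB x t); [|rewrite HB; ring].
    unfold K1T, eB. norm. field. }
  intros x t. split; [apply T1|].
  destruct (HAB x t) as [HA _].
  assert (E : dt (dx k1) x t = ev (Fi k1 k2 k1) (dX K1T) x t).
  { rewrite schwarz2 by auto. unfold dx at 1.
    rewrite (Derive_ext _ (fun y => ev (Fi k1 k2 k1) K1T y t)) by (intro; apply T1).
    apply Derive_ev; auto. }
  transitivity (ev (Fi k1 k2 k1) eR0 x t - ev (Fi k1 k2 k1) (dX K1T) x t - ev (Fi k1 k2 k1) eA x t);
    [|rewrite HA; unfold K2T, eR0, K1T; norm; field].
  rewrite <- E. unfold eA, eR0. norm. field.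
Qed.

Definition Eul (P0 P1 P2 : ex) : ex := Add P0 (Add (Mul (Cst (-1)) (dX P1)) (dX (dX P2))).

Lemma Euler1_ev rho k1 k2 t P0 P1 P2 (HF : forall v, smooth2 (Fi k1 k2 k1 v))
  (H0 : forall y, pd1 rho 0 (jet k1 t y) (jet k2 t y) = ev (Fi k1 k2 k1) P0 y t)
  (H1 : forall y, pd1 rho 1 (jet k1 t y) (jet k2 t y) = ev (Fi k1 k2 k1) P1 y t)
  (H2 : forall y, pd1 rho 2 (jet k1 t y) (jet k2 t y) = ev (Fi k1 k2 k1) P2 y t) :
  Euler1 2 rho k1 k2 t = fun x => ev (Fi k1 k2 k1) (Eul P0 P1 P2) x t.
Proof.
  apply functional_extensionality; intro x. unfold Euler1. cbn [sum_f_R0].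
  rewrite (Derive_n_ext _ _ 0 x H0), (Derive_n_ext _ _ 1 x H1), (Derive_n_ext _ _ 2 x H2).
  rewrite !(ev_Dn _ HF). unfold Eul. cbn [ev itX]. ring.
Qed.

Lemma Euler2_ev rho k1 k2 t P0 P1 P2 (HF : forall v, smooth2 (Fi k1 k2 k1 v))
  (H0 : forall y, pd2 rho 0 (jet k1 t y) (jet k2 t y) = ev (Fi k1 k2 k1) P0 y t)
  (H1 : forall y, pd2 rho 1 (jet k1 t y) (jet k2 t y) = ev (Fi k1 k2 k1) P1 y t)
  (H2 : forall y, pd2 rho 2 (jet k1 t y) (jet k2 t y) = ev (Fi k1 k2 k1) P2 y t) :
  Euler2 2 rho k1 k2 t = fun x => ev (Fi k1 k2 k1) (Eul P0 P1 P2) x t.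
Proof.
  apply functional_extensionality; intro x. unfold Euler2. cbn [sum_f_R0].
  rewrite (Derive_n_ext _ _ 0 x H0), (Derive_n_ext _ _ 1 x H1), (Derive_n_ext _ _ 2 x H2).
  rewrite !(ev_Dn _ HF). unfold Eul. cbn [ev itX]. ring.
Qed.

Ltac pdtac := intros; unfold pd1, pd2, rho2, rho4, upd; simpl;
  apply is_derive_unique; auto_derive; [exact I|]; field.

Lemma pd1_r2_0 a b : pd1 rho2 0 a b = b 0%nat. Proof. pdtac. Qed.
Lemma pd1_r2_1 a b : pd1 rho2 1 a b = 0. Proof. pdtac. Qed.
Lemma pd1_r2_2 a b : pd1 rho2 2 a b = 0. Proof. pdtac. Qed.
Lemma pd2_r2_0 a b : pd2 rho2 0 a b = a 0%nat. Proof. pdtac. Qed.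
Lemma pd2_r2_1 a b : pd2 rho2 1 a b = 0. Proof. pdtac. Qed.
Lemma pd2_r2_2 a b : pd2 rho2 2 a b = 0. Proof. pdtac. Qed.
Lemma pd1_r4_0 a b : pd1 rho4 0 a b = -2*a 0%nat*a 2%nat - a 1%nat * a 1%nat - 2*a 0%nat*b 1%nat
   + 4/9*(a 0%nat * a 0%nat * a 0%nat) + 2*(b 0%nat * b 0%nat). Proof. pdtac. Qed.
Lemma pd1_r4_1 a b : pd1 rho4 1 a b = -2*a 0%nat*a 1%nat. Proof. pdtac. Qed.
Lemma pd1_r4_2 a b : pd1 rho4 2 a b = 2/3*a 2%nat + b 1%nat - a 0%nat * a 0%nat. Proof. pdtac. Qed.
Lemma pd2_r4_0 a b : pd2 rho4 0 a b = 4*a 0%nat*b 0%nat. Proof. pdtac. Qed.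
Lemma pd2_r4_1 a b : pd2 rho4 1 a b = a 2%nat + 2*b 1%nat - a 0%nat * a 0%nat. Proof. pdtac. Qed.
Lemma pd2_r4_2 a b : pd2 rho4 2 a b = 0. Proof. pdtac. Qed.

Definition Q10 := kb 0.
Definition Q20 := ka 0.
Definition R10 := Add (Mul (Cst (-2)) (Mul (ka 0) (ka 2))) (Add (Mul (Cst (-1)) (Mul (ka 1) (ka 1)))
   (Add (Mul (Cst (-2)) (Mul (ka 0) (kb 1))) (Add (Mul (Cst (4/9)) (Mul (ka 0) (Mul (ka 0) (ka 0))))
   (Mul (Cst 2) (Mul (kb 0) (kb 0)))))).
Definition R11 := Mul (Cst (-2)) (Mul (ka 0) (ka 1)).
Definition R12 := Add (Mul (Cst (2/3)) (ka 2)) (Add (kb 1) (Mul (Cst (-1)) (Mul (ka 0) (ka 0)))).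
Definition R20 := Mul (Cst 4) (Mul (ka 0) (kb 0)).
Definition R21 := Add (ka 2) (Add (Mul (Cst 2) (kb 1)) (Mul (Cst (-1)) (Mul (ka 0) (ka 0)))).

Ltac brtac L := intro; rewrite L; rewrite ?jet_dpart; unfold Q10, Q20, R10, R11, R12, R20, R21; norm; field.

Section Eu.
Variables (k1 k2 : R -> R -> R) (t : R).
Hypothesis HF : forall v, smooth2 (Fi k1 k2 k1 v).
Lemma E1r2 : Euler1 2 rho2 k1 k2 t = fun x => ev (Fi k1 k2 k1) (Eul Q10 (Cst 0) (Cst 0)) x t.
Proof. apply Euler1_ev; auto; [brtac pd1_r2_0|brtac pd1_r2_1|brtac pd1_r2_2]. Qed.
Lemma E2r2 : Euler2 2 rho2 k1 k2 t = fun x => ev (Fi k1 k2 k1) (Eul Q20 (Cst 0) (Cst 0)) x t.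
Proof. apply Euler2_ev; auto; [brtac pd2_r2_0|brtac pd2_r2_1|brtac pd2_r2_2]. Qed.
Lemma E1r4 : Euler1 2 rho4 k1 k2 t = fun x => ev (Fi k1 k2 k1) (Eul R10 R11 R12) x t.
Proof. apply Euler1_ev; auto; [brtac pd1_r4_0|brtac pd1_r4_1|brtac pd1_r4_2]. Qed.
Lemma E2r4 : Euler2 2 rho4 k1 k2 t = fun x => ev (Fi k1 k2 k1) (Eul R20 R21 (Cst 0)) x t.
Proof. apply Euler2_ev; auto; [brtac pd2_r4_0|brtac pd2_r4_1|brtac pd2_r4_2]. Qed.
End Eu.

Definition Pop1e (a b u v : ex) : ex :=
  Add (Add (Mul (Cst (-2)) (itX 3 u)) (Add (itX 1 (Mul a u)) (Mul a (itX 1 u))))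
      (Add (Mul (Cst (-1)) (itX 4 v)) (Add (itX 2 (Mul a v)) (Add (Mul (Cst 2) (itX 1 (Mul b v))) (Mul b (itX 1 v))))).
Definition Pop2e (a b u v : ex) : ex :=
  Add (Add (itX 4 u) (Add (Mul (Cst (-1)) (Mul a (itX 2 u))) (Add (Mul (Cst 2) (Mul b (itX 1 u))) (itX 1 (Mul b u)))))
      (Add (Mul (Cst (2/3)) (Add (itX 5 v) (Add (Mul a (itX 1 (Mul a v))) (Add (Mul (Cst (-1)) (Mul a (itX 3 v))) (Mul (Cst (-1)) (itX 3 (Mul a v)))))))
           (Add (Mul b (itX 2 v)) (Mul (Cst (-1)) (itX 2 (Mul b v))))).

Section Ops.
Variable G : nat -> R -> R -> R.
Hypothesis HG : forall v, smooth2 (G v).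
Lemma ev_Dn_mul p q n x t : Derive_n (fun y => ev G p y t * ev G q y t) n x = ev G (itX n (Mul p q)) x t.
Proof. apply (ev_Dn G HG n (Mul p q)). Qed.
Lemma Pop1_ev t a b u v x :
  Pop1 (fun y => ev G a y t) (fun y => ev G b y t) (fun y => ev G u y t) (fun y => ev G v y t) x
  = ev G (Pop1e a b u v) x t.
Proof. unfold Pop1, Defs.D, mulf. cbv beta. rewrite !ev_Dn_mul, !(ev_Dn G HG). unfold Pop1e. cbn [ev]. ring. Qed.
Lemma Pop2_ev t a b u v x :
  Pop2 (fun y => ev G a y t) (fun y => ev G b y t) (fun y => ev G u y t) (fun y => ev G v y t) x
  = ev G (Pop2e a b u v) x t.
Proof. unfold Pop2, Defs.D, mulf. cbv beta. rewrite !ev_Dn_mul, !(ev_Dn G HG). unfold Pop2e. cbn [ev]. field. Qed.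
Lemma Qop1_ev t u v x : Qop1 (fun y => ev G u y t) (fun y => ev G v y t) x = ev G (dX v) x t.
Proof. unfold Qop1, Defs.D. apply (ev_Dn G HG 1). Qed.
Lemma Qop2_ev t u v x : Qop2 (fun y => ev G u y t) (fun y => ev G v y t) x = ev G (dX u) x t.
Proof. unfold Qop2, Defs.D. apply (ev_Dn G HG 1). Qed.
End Ops.

Fixpoint xo (e : ex) : bool := match e with
  | Cst _ => true | At v w => Nat.ltb v 2 && forallb (fun b => b) w
  | Add a b => xo a && xo b | Mul a b => xo a && xo b end.

Lemma forallb_rep w : forallb (fun b => b) w = true -> w = repeat true (length w).
Proof. induction w as [|b w IH]; simpl; auto. intro H. apply andb_prop in H as [H1 H2]. subst b. f_equal; auto. Qed.

Lemma dpart_per f L (Hp : forall x t, f (x + L) t = f x t) n x t :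
  dpart (repeat true n) f (x + L) t = dpart (repeat true n) f x t.
Proof.
  rewrite <- !jet_dpart. unfold jet.
  rewrite <- (Derive_n_comp_trans (fun y => f y t)).
  apply Derive_n_ext. intro; apply Hp.
Qed.

Lemma ev_per k1 k2 L (Hp : forall x t, k1 (x + L) t = k1 x t /\ k2 (x + L) t = k2 x t) e :
  xo e = true -> forall x t, ev (Fi k1 k2 k1) e (x + L) t = ev (Fi k1 k2 k1) e x t.
Proof.
  induction e as [r|v w|a IHa b IHb|a IHa b IHb]; simpl; intros H x t; auto.
  - apply andb_prop in H as [Hv Hw]. rewrite (forallb_rep w Hw).
    destruct v as [|[|v]]; simpl.
    + apply dpart_per. intros; apply Hp.
    + apply dpart_per. intros; apply Hp.
    + discriminate.
  - apply andb_prop in H as [H1 H2]. rewrite IHa, IHb; auto.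
  - apply andb_prop in H as [H1 H2]. rewrite IHa, IHb; auto.
Qed.

Lemma cont_swap (h : R -> R -> R) x t :
  continuous (fun p : R * R => h (fst p) (snd p)) (x, t) -> continuity_2d_pt (fun u v => h v u) t x.
Proof.
  intro H. apply continuity_2d_pt_filterlim.
  apply (continuous_comp_2 (U := prod_UniformSpace R_UniformSpace R_UniformSpace) (@snd R R) (@fst R R) h (t, x)).
  - apply continuous_snd.
  - apply continuous_fst.
  - exact H.
Qed.

Lemma conserved k1 k2 (H1 : smooth2 k1) (H2 : smooth2 k2) L (HL : 0 < L)
  (Hp : forall x t, k1 (x + L) t = k1 x t /\ k2 (x + L) t = k2 x t)
  rho erho Phi
  (Hrho : forall x t, rho (jet k1 t x) (jet k2 t x) = ev (Fi k1 k2 k1) erho x t)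
  (Hflux : forall x t, ev (Fi k1 k2 k1) (dT erho) x t = ev (Fi k1 k2 k1) (dX Phi) x t)
  (Hxo : xo Phi = true) :
  forall t1 t2, intdens rho k1 k2 L t1 = intdens rho k1 k2 L t2.
Proof.
  pose proof (Fi_smooth k1 k2 k1 H1 H2 H1) as HF.
  set (G := Fi k1 k2 k1) in *.
  assert (E : forall s, intdens rho k1 k2 L s = RInt (fun x => ev G erho x s) 0 L).
  { intro s. unfold intdens. apply RInt_ext. intros; apply Hrho. }
  assert (D0 : forall s, is_derive (fun s => RInt (fun x => ev G erho x s) 0 L) s 0).
  { intro s.
    assert (Hd := is_derive_RInt_param (fun u x => ev G erho x u) 0 L s).
    cbv beta in Hd.
    assert (V : RInt (fun t => Derive (fun u => ev G erho t u) s) 0 L = 0).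
    { rewrite (RInt_ext _ (Derive (fun y => ev G Phi y s))).
      - rewrite RInt_Derive.
        + assert (HL' : ev G Phi L s = ev G Phi 0 s).
          { pose proof (ev_per k1 k2 L Hp Phi Hxo 0 s) as HH. rewrite Rplus_0_l in HH. exact HH. }
          rewrite HL'. apply Rminus_diag_eq. reflexivity.
        + intros; eexists; apply ev_dX; auto.
        + intros y _.
          rewrite (functional_extensionality (Derive (fun y => ev G Phi y s)) (fun y => ev G (dX Phi) y s))
            by (intro; apply Derive_ev; auto).
          apply ev_contx; auto.
      - intros y _. rewrite DeriveT_ev, Derive_ev; auto. }
    rewrite V in Hd. apply Hd.
    - apply filter_forall. intros s' y _. eexists. apply ev_dT; auto.
    - intros y _.
      rewrite (functional_extensionality (fun u => fun v => Derive (fun z => ev G erho v z) u) (fun u v => ev G (dT erho) v u)).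
      + apply cont_swap. apply ev_cont; auto.
      + intro u. apply functional_extensionality. intro v. apply DeriveT_ev; auto.
    - apply filter_forall. intros s'. apply (ex_RInt_continuous (V:=R_CompleteNormedModule)). intros; apply ev_contx; auto. }
  intros t1 t2. rewrite !E.
  destruct (Rtotal_order t1 t2) as [Hlt|[Heq|Hgt]].
  - apply (eq_is_derive (fun s => RInt (fun x => ev G erho x s) 0 L)); auto.
  - subst; reflexivity.
  - symmetry. apply (eq_is_derive (fun s => RInt (fun x => ev G erho x s) 0 L)); auto.
Qed.

Section Flux.
Variables (k1 k2 : R -> R -> R).
Hypotheses (H1 : smooth2 k1) (H2 : smooth2 k2).
Hypothesis TF : forall x t, dt k1 x t = ev (Fi k1 k2 k1) K1T x t /\ dt k2 x t = ev (Fi k1 k2 k1) K2T x t.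

Lemma TA n x t : dpart (false :: repeat true n) k1 x t = ev (Fi k1 k2 k1) (itX n K1T) x t /\
                 dpart (false :: repeat true n) k2 x t = ev (Fi k1 k2 k1) (itX n K2T) x t.
Proof.
  pose proof (Fi_smooth k1 k2 k1 H1 H2 H1) as HF.
  split; rewrite perm1 by auto; rewrite <- Dn_dpart.
  - rewrite (Derive_n_ext _ (fun y => ev (Fi k1 k2 k1) K1T y t)) by (intro; apply TF).
    apply ev_Dn; auto.
  - rewrite (Derive_n_ext _ (fun y => ev (Fi k1 k2 k1) K2T y t)) by (intro; apply TF).
    apply ev_Dn; auto.
Qed.

Ltac fluxtac e P :=
  intros x t;
  destruct (TA 0 x t) as [A0 B0]; destruct (TA 1 x t) as [A1 B1]; destruct (TA 2 x t) as [A2 B2];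
  unfold K1T, K2T in A0, B0, A1, B1, A2, B2;
  normin A0; normin B0; normin A1; normin B1; normin A2; normin B2;
  unfold e, P; norm; rewrite ?A0, ?A1, ?A2, ?B0, ?B1, ?B2; field.

Lemma flux_k1 x t : ev (Fi k1 k2 k1) (dT e_k1) x t = ev (Fi k1 k2 k1) (dX Phi_k1) x t.
Proof. revert x t. fluxtac e_k1 Phi_k1. Qed.
Lemma flux_r2 x t : ev (Fi k1 k2 k1) (dT e_r2) x t = ev (Fi k1 k2 k1) (dX Phi_r2) x t.
Proof. revert x t. fluxtac e_r2 Phi_r2. Qed.
Lemma flux_r4 x t : ev (Fi k1 k2 k1) (dT e_r4) x t = ev (Fi k1 k2 k1) (dX Phi_r4) x t.
Proof. revert x t. fluxtac e_r4 Phi_r4. Qed.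
End Flux.

Lemma dens_k1 k1 k2 x t : rho_k1 (jet k1 t x) (jet k2 t x) = ev (Fi k1 k2 k1) e_k1 x t.
Proof. unfold rho_k1, e_k1. rewrite !jet_dpart. norm. field. Qed.
Lemma dens_r2 k1 k2 x t : rho2 (jet k1 t x) (jet k2 t x) = ev (Fi k1 k2 k1) e_r2 x t.
Proof. unfold rho2, e_r2. rewrite !jet_dpart. norm. field. Qed.
Lemma dens_r4 k1 k2 x t : rho4 (jet k1 t x) (jet k2 t x) = ev (Fi k1 k2 k1) e_r4 x t.
Proof. unfold rho4, e_r4. rewrite !jet_dpart. norm. field. Qed.

Theorem mainTheorem3
  (gamma : nat -> R -> R -> R) (k1 k2 : R -> R -> R)
  (Hsg : forall i, (i < 3)%nat -> smooth2 (gamma i))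
  (Hsk1 : smooth2 k1) (Hsk2 : smooth2 k2)
  (Harc : forall x t,
     det3 (fun i => gamma i x t) (fun i => dxn 1 (gamma i) x t)
          (fun i => dxn 2 (gamma i) x t) = 1)
  (Hstruct : forall i x t, (i < 3)%nat ->
     dxn 3 (gamma i) x t
     = dx (fun y s => k1 y s * gamma i y s) x t + k2 x t * gamma i x t)
  (Hflow : forall i x t, (i < 3)%nat ->
     dt (gamma i) x t
     = k1 x t * dxn 2 (gamma i) x t + k2 x t * dxn 1 (gamma i) x t
       + (- (dx k2 x t + 1/3 * (dxn 2 k1 x t + 2 * (k1 x t)^2)))
         * gamma i x t) :
  (forall x t,
     let K1 := fun y => k1 y t in
     let K2 := fun y => k2 y t in
     dt k1 x t = Pop1 K1 K2 (Euler1 2 rho2 k1 k2 t) (Euler2 2 rho2 k1 k2 t) x /\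
     dt k2 x t = Pop2 K1 K2 (Euler1 2 rho2 k1 k2 t) (Euler2 2 rho2 k1 k2 t) x /\
     dt k1 x t = Qop1 (Euler1 2 rho4 k1 k2 t) (Euler2 2 rho4 k1 k2 t) x /\
     dt k2 x t = Qop2 (Euler1 2 rho4 k1 k2 t) (Euler2 2 rho4 k1 k2 t) x)
  /\
  (forall L : R, 0 < L ->
     (forall x t, k1 (x + L) t = k1 x t /\ k2 (x + L) t = k2 x t) ->
     forall t1 t2,
       intdens rho2 k1 k2 L t1 = intdens rho2 k1 k2 L t2 /\
       intdens rho4 k1 k2 L t1 = intdens rho4 k1 k2 L t2 /\
       intdens rho_k1 k1 k2 L t1 = intdens rho_k1 k1 k2 L t2).
Proof.
  pose proof (Fi_smooth k1 k2 k1 Hsk1 Hsk2 Hsk1) as HF.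
  pose proof (timeform gamma k1 k2 Hsg Hsk1 Hsk2 Harc Hstruct Hflow) as TF.
  split.
  - intros x t. cbv zeta.
    rewrite (E1r2 k1 k2 t HF), (E2r2 k1 k2 t HF), (E1r4 k1 k2 t HF), (E2r4 k1 k2 t HF).
    change (fun y => k1 y t) with (fun y => ev (Fi k1 k2 k1) (ka 0) y t).
    change (fun y => k2 y t) with (fun y => ev (Fi k1 k2 k1) (kb 0) y t).
    rewrite (Pop1_ev _ HF), (Pop2_ev _ HF), (Qop1_ev _ HF), (Qop2_ev _ HF).
    destruct (TF x t) as [T1 T2]. rewrite T1, T2.
    unfold K1T, K2T, Pop1e, Pop2e, Eul, Q10, Q20, R10, R11, R12, R20, R21.
    norm. split; [field|split; [field|split; field]].
  - intros L HL Hp t1 t2. split; [|split].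
    + apply (conserved k1 k2 Hsk1 Hsk2 L HL Hp rho2 e_r2 Phi_r2).
      * intros; apply dens_r2.
      * intros; apply flux_r2; auto.
      * reflexivity.
    + apply (conserved k1 k2 Hsk1 Hsk2 L HL Hp rho4 e_r4 Phi_r4).
      * intros; apply dens_r4.
      * intros; apply flux_r4; auto.
      * reflexivity.
    + apply (conserved k1 k2 Hsk1 Hsk2 L HL Hp rho_k1 e_k1 Phi_k1).
      * intros; apply dens_k1.
      * intros; apply flux_k1; auto.
      * reflexivity.
Qed.
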